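(* For every $n\ge2$, the identity $x^2=x^3$ holds in the inverse semigroup $(S_n,\cdot,{}^{-1})$.
   Context: For $n\ge2$, $(S_n,\cdot,{}^{-1})$ is the inverse semigroup of partial one-to-one transformations of $\{0,1,\dots,3n+2\}$ (acting on the right, composition $x(\alpha\beta)=(x\alpha)\beta$) generated by the partial maps $\chi:\ n\mapsto 2n+1,\ n+1\mapsto 2n+2$ and, for $i=1,\dots,n$, $\chi_i:\ i-1\mapsto i,\ n+1+i\mapsto n+i,\ 2n+1+i\mapsto 2n+2+i$ (each undefined elsewhere). *)

(* Defs.v *)
From mathcomp Require Import all_boot.
Set Implicit Arguments. Unset Strict Implicit. Unset Printing Implicit Defensive.

Definition pt (n : nat) := 'I_(3 * n + 3).

Definition ptrans (n : nat) := {ffun pt n -> option (pt n)}.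

(* Composition acting on the right: x (a b) = (x a) b. *)
Definition tcomp n (a b : ptrans n) : ptrans n := [ffun x => obind b (a x)].

Definition tinv n (a : ptrans n) : ptrans n := [ffun y => [pick x | a x == Some y]].

Definition mkp n (f : nat -> option nat) : ptrans n :=
  [ffun x : pt n => obind (fun y => insub y) (f (val x))].

Definition chi n : ptrans n :=
  mkp n (fun x => if x == n then Some (2 * n + 1)
                  else if x == n + 1 then Some (2 * n + 2) else None).

Definition chi_i n (i : nat) : ptrans n :=
  mkp n (fun x => if x == i - 1 then Some i
                  else if x == n + 1 + i then Some (n + i)
                  else if x == 2 * n + 1 + i then Some (2 * n + 2 + i) else None).

Inductive generator n : ptrans n -> Prop :=
| gen_chi : generator (chi n)
| gen_chi_i i : 1 <= i <= n -> generator (chi_i n i).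

Inductive inS n : ptrans n -> Prop :=
| inS_gen a : generator a -> inS a
| inS_inv a : inS a -> inS (tinv a)
| inS_mul a b : inS a -> inS b -> inS (tcomp a b).

(* Main.v *)
Require Import Defs.
From mathcomp Require Import all_boot.
From mathcomp Require Import zify.
From Stdlib Require Import ZArith Lia.
Set Implicit Arguments. Unset Strict Implicit.

Definition rr n (x : pt n) : Z :=
  if (val x <= n)%nat then (Z.of_nat (val x) + 1)%Z
  else if (val x <= 2*n+1)%nat then (3 * (Z.of_nat n + 1) - Z.of_nat (val x))%Z
  else (Z.of_nat (val x) + 1)%Z.

Lemma rr_spec n (x : pt n) :
  ((Z.of_nat (val x) <= Z.of_nat n)%Z /\ rr x = (Z.of_nat (val x) + 1)%Z) \/
  ((Z.of_nat n < Z.of_nat (val x) <= 2 * Z.of_nat n + 1)%Z /\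
      rr x = (3 * (Z.of_nat n + 1) - Z.of_nat (val x))%Z) \/
  ((2 * Z.of_nat n + 1 < Z.of_nat (val x) < 3 * Z.of_nat n + 3)%Z /\
      rr x = (Z.of_nat (val x) + 1)%Z).
Proof.
have H : (val x < 3*n+3)%nat := ltn_ord x.
rewrite /rr; move: H; move: (val x) => v H.
case: ifP => H1; first by lia.
case: ifP => H2; lia.
Qed.

Lemma rr_inj n (x y : pt n) : rr x = rr y -> x = y.
Proof.
move=> H; apply: val_inj; have := rr_spec x; have := rr_spec y.
move=> Hy Hx; apply/Nat2Z.inj; lia.
Qed.

Lemma rr_bound n (x : pt n) : (1 <= rr x <= 3 * (Z.of_nat n + 1))%Z.
Proof. have := rr_spec x; lia. Qed.

Definition crossed (r d e : Z) :=
  ((r <= e < r + d) \/ (r + d <= e < r))%Z.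

Definition allowed (N e s : Z) :=
  (exists k, s = 2 * N * k)%Z \/
  ((e = N \/ e = 2 * N) /\ exists k, s = 2 * N * k + N)%Z \/
  (exists k, s + 2 * e = 2 * N * k)%Z.

Definition Inv n (x : ptrans n) := exists d : Z,
  (forall p q, x p = Some q -> rr q = (rr p + d)%Z) /\
  (forall p q p' q', x p = Some q -> x p' = Some q' ->
     forall e, crossed (rr p) d e -> allowed (Z.of_nat n + 1) e (rr p' - rr p)%Z).

Lemma mkpE n f (x y : pt n) : mkp n f x = Some y -> f (val x) = Some (val y).
Proof.
rewrite /mkp ffunE; case: (f (val x)) => //= v.
by case: insubP => // u _ Hu [<-]; rewrite Hu.
Qed.

Ltac solve_allowed :=
  first
  [ left; solve [ exists 0%Z; lia | exists 1%Z; lia | exists (-1)%Z; lia | exists 2%Z; lia ]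
  | right; left; split; [lia | solve [ exists 0%Z; lia | exists (-1)%Z; lia | exists 1%Z; lia ]]
  | right; right; solve [ exists 0%Z; lia | exists 1%Z; lia | exists 2%Z; lia | exists (-1)%Z; lia ] ].

Lemma chi_dom n (x y : pt n) : chi n x = Some y ->
  (val x = n /\ val y = 2*n+1) \/ (val x = n+1 /\ val y = 2*n+2).
Proof.
move/mkpE; case: eqP => [E|_]; first by move=> [H]; left; split => //; exact/esym.
case: eqP => [E|_] //; by move=> [H]; right; split => //; exact/esym.
Qed.

Lemma chii_dom n i (x y : pt n) : chi_i n i x = Some y ->
  (val x = i-1 /\ val y = i) \/ (val x = n+1+i /\ val y = n+i)
  \/ (val x = 2*n+1+i /\ val y = 2*n+2+i).
Proof.
move/mkpE; case: eqP => [E|_]; first by move=> [H]; left; split => //; exact/esym.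
case: eqP => [E|_]; first by move=> [H]; right; left; split => //; exact/esym.
case: eqP => [E|_] //; by move=> [H]; right; right; split => //; exact/esym.
Qed.

Lemma Inv_gen n (x : ptrans n) : generator x -> Inv x.
Proof.
case=> [|i Hi]; exists 1%Z; split.
- move=> p q /chi_dom H; have := rr_spec p; have := rr_spec q; lia.
- move=> p q p' q' /chi_dom H /chi_dom H' e; rewrite /crossed => He.
  have := rr_spec p; have := rr_spec p'; move=> Hp' Hp.
  have {He} -> : e = rr p by lia.
  case: H => [[H1 _]|[H1 _]]; case: H' => [[H2 _]|[H2 _]]; solve_allowed.
- move=> p q /chii_dom H; have := rr_spec p; have := rr_spec q; lia.
- move=> p q p' q' /chii_dom H /chii_dom H' e; rewrite /crossed => He.
  have := rr_spec p; have := rr_spec p'; move=> Hp' Hp.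
  have {He} -> : e = rr p by lia.
  case: H => [[H1 _]|[[H1 _]|[H1 _]]]; case: H' => [[H2 _]|[[H2 _]|[H2 _]]];
    solve_allowed.
Qed.

Lemma tcompP n (a b : ptrans n) p q : tcomp a b p = Some q ->
  exists m, a p = Some m /\ b m = Some q.
Proof. rewrite /tcomp ffunE; case: (a p) => //= m H; by exists m. Qed.

Lemma tinvP n (a : ptrans n) y z : tinv a y = Some z -> a z = Some y.
Proof.
rewrite /tinv ffunE; case: pickP => // w /eqP H [<-] //.
Qed.

Lemma Inv_comp n (a b : ptrans n) : Inv a -> Inv b -> Inv (tcomp a b).
Proof.
move=> [d1 [Ha1 Ha2]] [d2 [Hb1 Hb2]]; exists (d1 + d2)%Z; split.
- move=> p q /tcompP [m [H1 H2]]; rewrite (Hb1 _ _ H2) (Ha1 _ _ H1); lia.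
- move=> p q p' q' /tcompP [m [H1 H2]] /tcompP [m' [H1' H2']] e He.
  have E1 := Ha1 _ _ H1; have E2 := Ha1 _ _ H1'.
  have [Hc|Hc] : crossed (rr p) d1 e \/ crossed (rr m) d2 e by (move: He; rewrite /crossed; lia).
  + exact: Ha2 H1 H1' e Hc.
  + have -> : (rr p' - rr p = rr m' - rr m)%Z by lia.
    exact: Hb2 H2 H2' e Hc.
Qed.

Lemma Inv_inv n (a : ptrans n) : Inv a -> Inv (tinv a).
Proof.
move=> [d [Ha1 Ha2]]; exists (- d)%Z; split.
- move=> p q /tinvP H; have := Ha1 _ _ H; lia.
- move=> p q p' q' /tinvP H /tinvP H' e He.
  have E1 := Ha1 _ _ H; have E2 := Ha1 _ _ H'.
  have -> : (rr p' - rr p = rr q' - rr q)%Z by lia.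
  apply: (Ha2 _ _ _ _ H H' e); move: He; rewrite /crossed; lia.
Qed.

Lemma Inv_inS n (x : ptrans n) : inS x -> Inv x.
Proof.
elim=> [a Ha|a _ IH|a b _ IHa _ IHb]; [exact: Inv_gen | exact: Inv_inv | exact: Inv_comp].
Qed.

Lemma final_contra (N r d : Z) : (3 <= N)%Z -> d <> 0%Z ->
  (1 <= r <= 3 * N)%Z -> (1 <= r + d <= 3 * N)%Z -> (1 <= r + d + d <= 3 * N)%Z ->
  (forall e, crossed r d e -> allowed N e d) -> False.
Proof.
move=> HN Hd H1 H2 H3 Hall.
set e0 := Z.min r (r + d).
have A0 : allowed N e0 d by apply: Hall; rewrite /crossed /e0; lia.
case: A0 => [[k Hk]|[[He [k Hk]]|[k Hk]]].
- have : (k >= 1 \/ k <= -1)%Z by nia. nia.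
- have [E1|E1] : (d = 1 \/ d = -1)%Z \/ (d >= 2 \/ d <= -2)%Z by lia.
  + have : (k >= 0 \/ k <= -1)%Z by lia. nia.
  + have A1 : allowed N (e0 + 1) d by apply: Hall; rewrite /crossed /e0; lia.
    case: A1 => [[k1 Hk1]|[[He1 [k1 Hk1]]|[k1 Hk1]]].
    * have : (k1 >= 1 \/ k1 <= -1)%Z by nia. nia.
    * lia.
    * have : (k1 - k <= 1 \/ k1 - k = 2 \/ k1 - k >= 3)%Z by lia. case: He => He; nia.
- have [E1|E1] : (d = 1 \/ d = -1)%Z \/ (d >= 2 \/ d <= -2)%Z by lia.
  + lia.
  + have A1 : allowed N (e0 + 1) d by apply: Hall; rewrite /crossed /e0; lia.
    case: A1 => [[k1 Hk1]|[[He1 [k1 Hk1]]|[k1 Hk1]]].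
    * have : (k1 >= 1 \/ k1 <= -1)%Z by nia. nia.
    * have : (k - k1 <= 0 \/ k - k1 = 1 \/ k - k1 = 2 \/ k - k1 >= 3)%Z by lia. case: He1 => He1; nia.
    * have : (k1 - k >= 1 \/ k1 - k <= -1 \/ k1 = k)%Z by lia. nia.
Qed.

Theorem corollary5p2 (n : nat) : 2 <= n ->
  forall x : ptrans n, inS x -> tcomp x x = tcomp (tcomp x x) x.
Proof.
move=> Hn x /Inv_inS [d [H1 H2]].
apply/ffunP => p; rewrite !ffunE.
case Hp: (x p) => [q|] //=.
have Eq := H1 _ _ Hp.
have [Hd|Hd] : d = 0%Z \/ d <> 0%Z by lia.
- have Epq : q = p by apply: rr_inj; lia.
  subst q; by rewrite Hp /= Hp.
- idtac.
  case Hq: (x q) => [q'|] //=.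
  have Eq' := H1 _ _ Hq.
  exfalso; apply: (@final_contra (Z.of_nat n + 1) (rr p) d); first by lia.
  + exact: Hd.
  + exact: rr_bound.
  + rewrite -Eq; exact: rr_bound.
  + have := rr_bound q'; lia.
  + move=> e He; have := H2 _ _ _ _ Hp Hq e He; by rewrite Eq; have -> : (rr p + d - rr p = d)%Z by lia.
Qed.
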